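(* Let $R$ be an infinite-dimensional affine algebra over a field $K$, let $\{e_i\}_{i\ge1}$ be a basis of $R$ over $K$, and let $S=\{r_1,\dots,r_s\}\subseteq R$. Suppose that for every $l$ and every choice of distinct basis elements $e_{i_1},\dots,e_{i_l}$, the $K$-span of $\{e_{i_t}r_j: 1\le t\le l,\ 1\le j\le s\}$ has dimension at least $2l$. Then there exist a partition $\{e_i\}_{i\ge1}=A_1\cup\cdots\cup A_m$ and elements $g_1,h_1,\dots,g_m,h_m\in S$ such that the sets $A_1g_1,A_1h_1,A_2g_2,A_2h_2,\dots,A_mg_m,A_mh_m$ are mutually independent.
   Context: An affine algebra is a finitely generated associative algebra over $K$, not necessarily unital. For $A\subseteq R$, $g\in R$, $Ag=\{ag:a\in A\}$. Subsets $B_1,\dots,B_k$ of $R$ are mutually independent if they are pairwise disjoint and their union is linearly independent over $K$. *)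

(* Defs.v *)
From HB Require Import structures.
From mathcomp Require Import all_boot all_order all_algebra.
Set Implicit Arguments. Unset Strict Implicit. Unset Printing Implicit Defensive.
Import GRing.Theory.
Local Open Scope ring_scope.

Section Defs.
Variables (K : fieldType) (R : lmodType K).

Definition is_assoc_algebra_mul (mul : R -> R -> R) : Prop :=
  [/\ (forall x y z, mul x (mul y z) = mul (mul x y) z),
      (forall x y z, mul (x + y) z = mul x z + mul y z),
      (forall x y z, mul x (y + z) = mul x y + mul x z),
      (forall (a : K) x y, mul (a *: x) y = a *: mul x y)
    & (forall (a : K) x y, mul x (a *: y) = a *: mul x y)].

Inductive in_subalg (mul : R -> R -> R) (gens : seq R) : R -> Prop :=
  | sa_gen x : x \in gens -> in_subalg mul gens x
  | sa_zero : in_subalg mul gens 0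
  | sa_add x y : in_subalg mul gens x -> in_subalg mul gens y ->
                 in_subalg mul gens (x + y)
  | sa_scale (a : K) x : in_subalg mul gens x -> in_subalg mul gens (a *: x)
  | sa_mul x y : in_subalg mul gens x -> in_subalg mul gens y ->
                 in_subalg mul gens (mul x y).

Definition affine (mul : R -> R -> R) : Prop :=
  exists gens : seq R, forall v, in_subalg mul gens v.

Definition lin_indep (X : R -> Prop) : Prop :=
  forall (s : seq R) (c : R -> K),
    uniq s -> (forall x, x \in s -> X x) ->
    \sum_(x <- s) c x *: x = 0 -> forall x, x \in s -> c x = 0.

Definition in_span (X : R -> Prop) (v : R) : Prop :=
  exists (s : seq R) (c : R -> K),
    (forall x, x \in s -> X x) /\ v = \sum_(x <- s) c x *: x.

Definition span_dim_ge (X : R -> Prop) (n : nat) : Prop :=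
  exists s : seq R, [/\ size s = n, uniq s,
    (forall x, x \in s -> in_span X x) & lin_indep (fun x => x \in s)].

Definition infinite_dim : Prop :=
  ~ exists s : seq R, forall v, in_span (fun x => x \in s) v.

(* e : nat -> R is a basis of R (indexed by nat instead of i >= 1). *)
Definition is_basis (e : nat -> R) : Prop :=
  [/\ injective e, lin_indep (fun x => exists i, x = e i)
    & forall v, in_span (fun x => exists i, x = e i) v].

Definition rmul_img (mul : R -> R -> R) (A : R -> Prop) (g : R) : R -> Prop :=
  fun y => exists x, A x /\ y = mul x g.

(* Mutually independent family of subsets: pairwise disjoint with
   linearly independent union. *)
Definition mutually_independent (I : Type) (B : I -> R -> Prop) : Prop :=
  (forall i j, i <> j -> forall x, B i x -> B j x -> False) /\
  lin_indep (fun x => exists i, B i x).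

End Defs.

(* Main.v *)
Require Import Defs.
From HB Require Import structures.
From mathcomp Require Import all_boot all_order all_algebra.
From mathcomp Require Import zify.
From Stdlib Require Import Classical ClassicalEpsilon.
Import GRing.Theory.
Local Open Scope ring_scope.

Set Implicit Arguments. Unset Strict Implicit. Unset Printing Implicit Defensive.

Section Rado.
Variables (F : fieldType) (Ag G : finType) (N : nat) (v : G -> 'rV[F]_N).

Definition rk (T : {set G}) := \rank (\sum_(g in T) <<v g>>)%MS.

Lemma sum_sub (T T' : {set G}) : T \subset T' ->
  (\sum_(g in T) <<v g>> <= \sum_(g in T') <<v g>>)%MS.
Proof.
move=> /subsetP sT; apply/sumsmx_subP => g gT.
by apply: (sumsmx_sup g); [exact: sT | exact: submx_refl].
Qed.

Lemma rk_mono (T T' : {set G}) : T \subset T' -> (rk T <= rk T')%N.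
Proof. by move=> sT; apply: mxrankS; apply: sum_sub. Qed.

Lemma rk_sub (T T' : {set G}) : (rk (T :|: T') + rk (T :&: T') <= rk T + rk T')%N.
Proof.
rewrite /rk -(mxrank_sum_cap (\sum_(g in T) <<v g>>)%MS (\sum_(g in T') <<v g>>)%MS).
rewrite leq_add //; apply: mxrankS.
  apply/sumsmx_subP => g; rewrite in_setU => /orP [] gT.
    apply: submx_trans (addsmxSl _ _).
    by apply: (sumsmx_sup g) => //; exact: submx_refl.
  apply: submx_trans (addsmxSr _ _).
  by apply: (sumsmx_sup g) => //; exact: submx_refl.
by rewrite sub_capmx !sum_sub // ?subsetIl ?subsetIr.
Qed.

Lemma rk_split (T : {set G}) g : g \in T ->
  (\sum_(h in T) <<v h>> = <<v g>> + \sum_(h in T :\ g) <<v h>>)%MS.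
Proof.
move=> gT; rewrite (bigD1 g) //=; congr (_ + _)%MS.
by apply: eq_bigl => h; rewrite in_setD1 andbC.
Qed.

Lemma rkD1 (T : {set G}) g : g \in T ->
  (v g <= \sum_(h in T :\ g) <<v h>>)%MS -> rk T = rk (T :\ g).
Proof.
move=> gT sg; rewrite /rk (rk_split gT).
have sg' : (<<v g>> <= \sum_(h in T :\ g) <<v h>>)%MS by rewrite genmxE.
by rewrite (addsmx_idPr sg').
Qed.

Lemma rk0 : rk set0 = 0%N.
Proof. by rewrite /rk big_set0 mxrank0. Qed.

Lemma rk_card (T : {set G}) : (rk T <= #|T|)%N.
Proof.
have [n] := ubnP #|T|; elim: n T => // n IH T; rewrite ltnS => lt.
have [->|/set0Pn [g gT]] := eqVneq T set0; first by rewrite rk0.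
rewrite /rk (rk_split gT) (cardsD1 g T) gT.
apply: leq_trans (mxrank_adds_leqif _ _).1 _.
rewrite -[X in (_ <= X)%N]add1n leq_add //.
  by rewrite genmxE rank_leq_row.
apply: IH; move: lt; rewrite (cardsD1 g T) gT; lia.
Qed.

Definition Xd (X : Ag -> {set G}) (a : Ag) (z : G) : Ag -> {set G} :=
  fun b => if b == a then X a :\ z else X b.

Lemma Xd_sub X a z b : Xd X a z b \subset X b.
Proof. by rewrite /Xd; case: eqP => [->|_]; rewrite ?subsetDl. Qed.

Lemma Xd_cup X a z (J : {set Ag}) :
  \bigcup_(b in J :\ a) X b \subset \bigcup_(b in J) Xd X a z b.
Proof.
apply/subsetP => g /bigcupP [b]; rewrite in_setD1 => /andP [ba bJ] gb.
by apply/bigcupP; exists b => //; rewrite /Xd (negbTE ba).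
Qed.

Lemma rado (X : Ag -> {set G}) :
  (forall J : {set Ag}, (#|J| <= rk (\bigcup_(a in J) X a))%N) ->
  exists f : Ag -> G, [/\ forall a, f a \in X a, injective f &
    forall a, ~~ (v (f a) <= \sum_(g in (f @: setT) :\ f a) <<v g>>)%MS].
Proof.
have [n] := ubnP (\sum_a #|X a|); elim: n X => // n IH X ltXn HX.
case: (boolP [exists a, (1 < #|X a|)%N]) => [/existsP [a /card_gt1P [x [y [xa ya xy]]]]|].
  have Hlt z : z \in X a -> (\sum_b #|Xd X a z b| < n)%N.
    move=> za; rewrite -ltnS; apply: leq_trans ltXn; rewrite ltnS [X in (_ < X)%N](bigD1 a) //=.
    rewrite (bigD1 a) //= /Xd eqxx.
    rewrite (eq_bigr (fun i => #|X i|)); last by move=> b /negbTE ->.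
    by rewrite ltn_add2r [X in (_ < X)%N](cardsD1 z) za.
  have Hfin z : z \in X a -> (forall J : {set Ag}, (#|J| <= rk (\bigcup_(b in J) Xd X a z b))%N) ->
      exists f : Ag -> G, [/\ forall a, f a \in X a, injective f &
      forall a, ~~ (v (f a) <= \sum_(g in (f @: setT) :\ f a) <<v g>>)%MS].
    move=> za HJ; have [f [fX finj fdrop]] := IH _ (Hlt z za) HJ.
    by exists f; split=> // b; apply: (subsetP (Xd_sub X a z b)).
  case: (boolP [forall J : {set Ag}, (#|J| <= rk (\bigcup_(b in J) Xd X a x b))%N]).
    by move/forallP => H; apply: (Hfin x xa).
  case: (boolP [forall J : {set Ag}, (#|J| <= rk (\bigcup_(b in J) Xd X a y b))%N]).
    by move/forallP => H _; apply: (Hfin y ya).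
  rewrite !negb_forall => /existsP [J2 H2] /existsP [J1 H1].
  rewrite -ltnNge in H1; rewrite -ltnNge in H2.
  set U1 := \bigcup_(b in J1) Xd X a x b in H1.
  set U2 := \bigcup_(b in J2) Xd X a y b in H2.
  have aJ (J : {set Ag}) z : (rk (\bigcup_(b in J) Xd X a z b) < #|J|)%N -> a \in J.
    move=> HJ; apply/negPn/negP => aJ.
    have := HX J; rewrite leqNgt; apply/negP/negPn.
    apply: leq_ltn_trans HJ; apply: rk_mono.
    have eJ : J :\ a = J.
      by apply/setP => b; rewrite in_setD1; case: eqVneq => // ->; rewrite (negbTE aJ).
    by have := Xd_cup X a z J; rewrite eJ.
  have a1 := aJ _ _ H1; have a2 := aJ _ _ H2.
  have hU : \bigcup_(b in J1 :|: J2) X b \subset U1 :|: U2.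
    apply/subsetP => g /bigcupP [b]; rewrite in_setU => bJ gb.
    have [eba|nba] := eqVneq b a.
      subst b; have [gx|gx] := eqVneq g x.
        subst g; rewrite in_setU; apply/orP; right; apply/bigcupP; exists a => //.
        by rewrite /Xd eqxx in_setD1 xy xa.
      rewrite in_setU; apply/orP; left; apply/bigcupP; exists a => //.
      by rewrite /Xd eqxx in_setD1 gx gb.
    rewrite in_setU; case/orP: bJ => bJ; apply/orP; [left|right]; apply/bigcupP;
      by exists b => //; rewrite /Xd (negbTE nba).
  have hI : \bigcup_(b in (J1 :&: J2) :\ a) X b \subset U1 :&: U2.
    rewrite subsetI; apply/andP; split.
      apply: subset_trans (Xd_cup X a x J1); apply/subsetP => g /bigcupP [b bJ gb].
      by apply/bigcupP; exists b => //; move: bJ; rewrite !in_setD1 in_setI => /and3P [-> ->].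
    apply: subset_trans (Xd_cup X a y J2); apply/subsetP => g /bigcupP [b bJ gb].
    by apply/bigcupP; exists b => //; move: bJ; rewrite !in_setD1 in_setI => /and3P [-> _ ->].
  have r1 := leq_trans (HX _) (rk_mono hU).
  have r2 := leq_trans (HX _) (rk_mono hI).
  have r3 := rk_sub U1 U2.
  have c1 := cardsUI J1 J2.
  have c2 := cardsD1 a (J1 :&: J2); rewrite in_setI a1 a2 /= in c2.
  lia.
rewrite negb_exists => /forallP Hle.
have Hs b : exists g, X b = [set g].
  apply/cards1P; rewrite eqn_leq leqNgt Hle /= card_gt0.
  apply/negP => /eqP X0; have := HX [set b]; rewrite cards1 big_set1 X0 rk0.
  by [].
have [f Hf] := fin_all_exists Hs.
have Himg : \bigcup_(a in [set: Ag]) X a = f @: [set: Ag].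
  apply/setP => g; apply/bigcupP/imsetP => [[b _]|[b _ ->]].
    by rewrite Hf inE => /eqP ->; exists b.
  by exists b => //; rewrite Hf inE.
have HT := HX [set: Ag]; rewrite Himg in HT.
have Hc := leq_trans HT (rk_card _).
have Hc2 : (#|f @: [set: Ag]| <= #|[set: Ag]|)%N by apply: leq_imset_card.
have finj : injective f.
  have H : {in [set: Ag] &, injective f}.
    by apply/imset_injP; rewrite eqn_leq Hc2 Hc.
  by move=> x1 x2; apply: H; rewrite inE.
exists f; split=> //.
  by move=> b; rewrite Hf inE.
move=> b; apply/negP => hb.
have := rkD1 (imset_f f (in_setT b)) hb.
have := rk_card (f @: [set: Ag] :\ f b).
have := cardsD1 (f b) (f @: [set: Ag]); rewrite imset_f ?in_setT //.
move=> e1 e2 e3; move: HT; rewrite e3; lia.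
Qed.

End Rado.

Section Coord.
Variables (K : fieldType) (R : lmodType K) (e : nat -> R).
Hypothesis He : is_basis e.

Lemma widen_sum (F : nat -> R) n m : (forall k, (n <= k)%N -> F k = 0) -> (n <= m)%N ->
  \sum_(k < m) F k = \sum_(k < n) F k.
Proof.
move=> F0 nm; rewrite [RHS](big_ord_widen m F nm) [RHS]big_mkcond /=.
by apply: eq_bigr => k _; case: ltnP => // h; rewrite F0.
Qed.

Lemma rep v : exists na : nat * (nat -> K),
  (forall k, (na.1 <= k)%N -> na.2 k = 0) /\ v = \sum_(k < na.1) na.2 k *: e k.
Proof.
case: He => einj _ /(_ v) [s [c [Hs Hv]]]; subst v.
elim: s Hs => [|x s IH] Hs.
  by exists (0%N, fun _ => 0); split => //; rewrite big_nil big_ord0.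
have [|[n a] /= [a0 Hr]] := IH; first by move=> y ys; apply: Hs; rewrite inE ys orbT.
have [i xi] := Hs x (mem_head _ _).
exists (maxn n i.+1, fun k => a k + (if k == i then c x else 0)) => /=; split.
  move=> k; rewrite geq_max => /andP [nk ik].
  by rewrite a0 // add0r; case: eqP => // ki; move: ik; rewrite ki ltnn.
rewrite big_cons Hr (eq_bigr (fun k : 'I_(maxn n i.+1) => a k *: e k + (if (k : nat) == i then c x *: e i else 0))); last first.
  by move=> k _; rewrite scalerDl; case: eqP => [->|]; rewrite ?scale0r.
rewrite big_split /= -big_mkcond (big_ord1_eq _ (fun _ => c x *: e i)) leq_max ltnSn orbT.
rewrite (widen_sum (F := fun k => a k *: e k) (n := n) (m := maxn n i.+1)) ?leq_maxl //.
  by rewrite addrC xi.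
by move=> k nk; rewrite a0 // scale0r.
Qed.

Lemma uniq_rep n (a : nat -> K) : \sum_(k < n) a k *: e k = 0 -> forall k, (k < n)%N -> a k = 0.
Proof.
case: He => einj Hli _ Hs k kn.
pose c x := \sum_(j < n | e j == x) a j.
have ce j : (j < n)%N -> c (e j) = a j.
  move=> jn; rewrite /c (eq_bigl (fun i : 'I_n => (i : nat) == j)).
    by rewrite big_ord1_eq jn.
  by move=> i; rewrite inj_eq.
have H := Hli [seq e j | j <- iota 0 n] c.
rewrite -(ce k kn); apply: H.
- by rewrite map_inj_uniq // iota_uniq.
- by move=> x /mapP [j _ ->]; exists j.
- have -> : iota 0 n = index_iota 0 n by rewrite /index_iota subn0.
  rewrite big_map big_mkord -[RHS]Hs; apply: eq_bigr => j _.
  by rewrite ce.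
- by apply: map_f; rewrite mem_iota.
Qed.

Definition brepr v := proj1_sig (constructive_indefinite_description _ (rep v)).
Definition bnv v := (brepr v).1.
Definition bcoord v := (brepr v).2.

Lemma coord_spec v : (forall k, (bnv v <= k)%N -> bcoord v k = 0) /\ v = \sum_(k < bnv v) bcoord v k *: e k.
Proof. exact: (proj2_sig (constructive_indefinite_description _ (rep v))). Qed.

Lemma coord_uniq v n (a : nat -> K) : (forall k, (n <= k)%N -> a k = 0) ->
  v = \sum_(k < n) a k *: e k -> forall k, bcoord v k = a k.
Proof.
move=> a0 Hv k; have [c0 Hc] := coord_spec v.
pose M := maxn (maxn n (bnv v)) k.+1.
have H : \sum_(j < M) (bcoord v j - a j) *: e j = 0.
  rewrite (eq_bigr (fun j : 'I_M => bcoord v j *: e j - a j *: e j)); last by move=> j _; rewrite scalerBl.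
  rewrite sumrB (widen_sum (F := fun j => bcoord v j *: e j) (n := bnv v)); last 2 first.
  - by move=> j hj; rewrite c0 // scale0r.
  - by rewrite /M; lia.
  rewrite (widen_sum (F := fun j => a j *: e j) (n := n)); last 2 first.
  - by move=> j hj; rewrite a0 // scale0r.
  - by rewrite /M; lia.
  by rewrite -Hc -Hv subrr.
apply/eqP; rewrite -subr_eq0; apply/eqP; apply: (uniq_rep (a := fun j => bcoord v j - a j) H).
by rewrite /M; lia.
Qed.

Lemma coordD u w k : bcoord (u + w) k = bcoord u k + bcoord w k.
Proof.
move: k; apply: (coord_uniq (n := maxn (bnv u) (bnv w)) (a := fun k => bcoord u k + bcoord w k)).
  move=> k; rewrite geq_max => /andP [h1 h2].
  by rewrite (proj1 (coord_spec u)) // (proj1 (coord_spec w)) // addr0.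
rewrite (eq_bigr (fun j : 'I_(maxn (bnv u) (bnv w)) => bcoord u j *: e j + bcoord w j *: e j)); last by move=> j _; rewrite scalerDl.
rewrite big_split /=.
rewrite (widen_sum (F := fun j => bcoord u j *: e j) (n := bnv u)); last 2 first.
- by move=> j hj; rewrite (proj1 (coord_spec u)) // scale0r.
- exact: leq_maxl.
rewrite (widen_sum (F := fun j => bcoord w j *: e j) (n := bnv w)); last 2 first.
- by move=> j hj; rewrite (proj1 (coord_spec w)) // scale0r.
- exact: leq_maxr.
by rewrite -!(proj2 (coord_spec _)).
Qed.

Lemma coordZ (c : K) u k : bcoord (c *: u) k = c * bcoord u k.
Proof.
move: k; apply: (coord_uniq (n := bnv u) (a := fun k => c * bcoord u k)).
  by move=> k hk; rewrite (proj1 (coord_spec u)) // mulr0.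
rewrite {1}(proj2 (coord_spec u)) scaler_sumr; apply: eq_bigr => j _.
by rewrite scalerA.
Qed.

Lemma coord_sum (s : seq R) (c : R -> K) k :
  bcoord (\sum_(x <- s) c x *: x) k = \sum_(x <- s) c x * bcoord x k.
Proof.
elim: s => [|x s IH]; last by rewrite !big_cons coordD coordZ IH.
rewrite !big_nil -(scale0r 0 : 0 *: (0 : R) = 0) coordZ mul0r //.
Qed.

Definition sb N v := forall k, (N <= k)%N -> bcoord v k = 0.

Lemma sb_sum N (s : seq R) (c : R -> K) : (forall x, x \in s -> sb N x) ->
  sb N (\sum_(x <- s) c x *: x).
Proof.
move=> H k hk; rewrite coord_sum big1_seq // => x /andP [_ xs].
by rewrite H // mulr0.
Qed.

Definition bphi N v : 'rV[K]_N := \row_(k < N) bcoord v k.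

Lemma bphi_sum N (s : seq R) (c : R -> K) :
  bphi N (\sum_(x <- s) c x *: x) = \sum_(x <- s) c x *: bphi N x.
Proof.
apply/rowP => k; rewrite !mxE coord_sum summxE; apply: eq_bigr => x _.
by rewrite !mxE.
Qed.

Lemma bphi_inj N v : sb N v -> bphi N v = 0 -> v = 0.
Proof.
move=> Hs H0; rewrite (proj2 (coord_spec v)) big1 // => k _.
case: (ltnP k N) => hk.
  by have := congr1 (fun M : 'rV[K]_N => M 0 (Ordinal hk)) H0; rewrite !mxE => ->; rewrite scale0r.
by rewrite Hs // scale0r.
Qed.

End Coord.

Lemma row_free_of (F : fieldType) m n (M : 'M[F]_(m, n)) :
  (forall c : 'rV_m, c *m M = 0 -> c = 0) -> row_free M.
Proof.
move=> H; rewrite -kermx_eq0; apply/eqP/row_matrixP => k; rewrite row0.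
by apply: H; rewrite -row_mul mulmx_ker row0.
Qed.

Section Finite.
Variables (K : fieldType) (R : lmodType K) (mul : R -> R -> R) (e : nat -> R).
Hypothesis He : is_basis e.
Variable S : seq R.
Hypothesis Hdim : forall I : seq nat, uniq I ->
     span_dim_ge (fun y => exists i r, [/\ i \in I, r \in S & y = mul (e i) r])
                 (2 * size I)%N.

Definition w (F : nat -> bool -> nat) i b := mul (e i) S`_(F i b).

Definition Pn n F := [/\ (forall i b, (i < n)%N -> (F i b < size S)%N),
  (forall i b i' b', (i < n)%N -> (i' < n)%N -> w F i b = w F i' b' -> i = i' /\ b = b')
  & lin_indep (fun x => exists i b, (i < n)%N /\ x = w F i b)].

Lemma coord0 k : bcoord He 0 k = 0.
Proof. by rewrite -(scale0r (0 : R)) coordZ mul0r. Qed.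

Lemma FL n : exists F, Pn n F.
Proof.
pose s := size S.
pose u (g : 'I_n * 'I_s) := mul (e g.1) S`_g.2.
pose N := (\max_(g : 'I_n * 'I_s) bnv He (u g))%N.
have sbu g : sb He N (u g).
  move=> k hk; apply: (proj1 (coord_spec He (u g))).
  by apply: leq_trans hk; apply: leq_bigmax.
pose v g := bphi He N (u g).
pose X (a : 'I_n * bool) : {set 'I_n * 'I_s} := [set g | g.1 == a.1].
have HX : forall J : {set 'I_n * bool}, (#|J| <= rk v (\bigcup_(a in J) X a))%N.
  move=> J.
  pose I' := [set a.1 | a in J].
  pose I := [seq val i | i <- enum I'].
  have uI : uniq I by rewrite map_inj_uniq ?enum_uniq //; exact: val_inj.
  have sI : size I = #|I'| by rewrite size_map -cardE.
  have cJ : (#|J| <= 2 * #|I'|)%N.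
    have : J \subset setX I' [set: bool].
      by apply/subsetP => a aJ; rewrite inE /= in_setT andbT; apply/imsetP; exists a.
    by move/subset_leq_card; rewrite cardsX cardsT card_bool mulnC.
  have [sl [szl usl spl lil]] := Hdim uI.
  set B := (\sum_(g in \bigcup_(a in J) X a) <<v g>>)%MS.
  have HY y : (exists i r, [/\ i \in I, r \in S & y = mul (e i) r]) ->
      sb He N y /\ (bphi He N y <= B)%MS.
    move=> [i [r [iI rS ->]]].
    move: iI => /mapP [i0 i0I ->]; rewrite mem_enum in i0I.
    move: i0I => /imsetP [a aJ ->].
    have jS : (index r S < s)%N by rewrite index_mem.
    pose g := (a.1, Ordinal jS).
    have ug : u g = mul (e (val a.1)) r by rewrite /u /= nth_index.
    rewrite -ug; split => //.
    apply: (sumsmx_sup g); last by rewrite genmxE.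
    by apply/bigcupP; exists a => //; rewrite inE.
  have HS x : x \in sl -> sb He N x /\ (bphi He N x <= B)%MS.
    move=> /spl [sy [cy [Hy ->]]]; split.
      by apply: sb_sum => y /Hy /HY [].
    rewrite bphi_sum big_seq; apply: summx_sub => y ysy; apply: scalemx_sub.
    exact: (HY y (Hy y ysy)).2.
  pose M := \matrix_(k < size sl) bphi He N (nth 0 sl k).
  have rfM : row_free M.
    apply: row_free_of => c hc.
    pose cf x := \sum_(k < size sl | nth 0 sl k == x) c 0 k.
    have cfk (k : 'I_(size sl)) : cf (nth 0 sl k) = c 0 k.
      rewrite /cf (eq_bigl (fun j => j == k)) ?big_pred1_eq // => j.
      by rewrite nth_uniq.
    have Hsum : \sum_(x <- sl) cf x *: x = 0.
      apply: (bphi_inj (He := He) (N := N)).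
        by apply: sb_sum => x /HS [].
      rewrite bphi_sum (big_nth 0) big_mkord.
      rewrite mulmx_sum_row in hc; rewrite -[RHS]hc; apply: eq_bigr => k _.
      by rewrite cfk rowK.
    apply/rowP => k; rewrite mxE -cfk.
    by apply: (lil sl cf usl) => //; apply: mem_nth.
  have MB : (M <= B)%MS.
    by apply/row_subP => k; rewrite rowK; exact: (HS _ (mem_nth 0 (ltn_ord k))).2.
  have := mxrankS MB; move: rfM; rewrite /row_free => /eqP ->.
  rewrite szl sI /rk -/B; move: cJ; lia.
have [f [fX finj fdrop]] := rado HX.
have f1 a : (f a).1 = a.1 by have := fX a; rewrite inE => /eqP.
pose F i b := if insub i is Some i0 then val (f (i0, b)).2 else 0%N.
have Fv (i0 : 'I_n) b : F (val i0) b = val (f (i0, b)).2 by rewrite /F valK.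
have wF (i0 : 'I_n) b : w F (val i0) b = u (f (i0, b)).
  by rewrite /w /u Fv f1.
set B := fun a => (\sum_(g in [set f x | x in [set: 'I_n * bool]] :\ f a) <<v g>>)%MS.
have inB a a' : a' != a -> (v (f a') <= B a)%MS.
  move=> ne; apply: (sumsmx_sup (f a')); last by rewrite genmxE.
  by rewrite in_setD1 (inj_eq finj) ne imset_f ?in_setT.
exists F; split.
- by move=> i b hi; rewrite -[i]/(val (Ordinal hi)) Fv; exact: ltn_ord.
- move=> i b i' b' hi hi'; rewrite -[i]/(val (Ordinal hi)) -[i']/(val (Ordinal hi')) !wF => he.
  have [ea|ne] := eqVneq (Ordinal hi', b') (Ordinal hi, b).
    have e1 : i' = i := f_equal (fun p : 'I_n * bool => val p.1) ea.
    have e2 : b' = b := f_equal snd ea.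
    by split; [exact: esym e1 | exact: esym e2].
  have := fdrop (Ordinal hi, b); rewrite /v he => /negP; case.
  exact: inB ne.
- move=> sl c usl Hsl Hs x0 x0s; apply/eqP/negPn/negP => cx0.
  have [i0 [b0 [hi0 ex0]]] := Hsl x0 x0s.
  pose a0 := (Ordinal hi0, b0).
  have ex0' : x0 = u (f a0) by rewrite ex0 -wF.
  have := fdrop a0; rewrite /v -ex0' => /negP; apply.
  have H0 := congr1 (bphi He N) Hs.
  rewrite bphi_sum (bigD1_seq x0) //= in H0.
  have Z : bphi He N 0 = 0 by apply/rowP => k; rewrite !mxE coord0.
  rewrite Z in H0.
  set Sm := (\sum_(x <- sl | x != x0) c x *: bphi He N x) in H0.
  have E1 : c x0 *: bphi He N x0 = - Sm by apply/eqP; rewrite -addr_eq0 H0.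
  have E : bphi He N x0 = (c x0)^-1 *: (- Sm).
    by rewrite -E1 scalerA mulVf // scale1r.
  rewrite E; apply: scalemx_sub; rewrite -scaleN1r; apply: scalemx_sub.
  rewrite /Sm big_seq_cond; apply: summx_sub => x /andP [xs nx]; apply: scalemx_sub.
  have [i [b [hi ex]]] := Hsl x xs.
  have ex' : x = u (f (Ordinal hi, b)) by rewrite ex -wF.
  rewrite ex' ; apply: inB; apply/eqP => ea.
  by move: nx; rewrite ex' ex0' ea eqxx.
Qed.


Lemma Pn_restr n m F : (m <= n)%N -> Pn n F -> Pn m F.
Proof.
move=> mn [H1 H2 H3]; split.
- by move=> i b hi; apply: H1; apply: leq_trans mn.
- by move=> i b i' b' hi hi'; apply: H2; apply: leq_trans mn.
- move=> sl c usl Hsl; apply: H3 => // x /Hsl [i [b [hi ->]]].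
  by exists i, b; split => //; apply: leq_trans mn.
Qed.

Lemma Pn_ext n F G : (forall i b, (i < n)%N -> F i b = G i b) -> Pn n F -> Pn n G.
Proof.
move=> FG [H1 H2 H3]; have wFG i b : (i < n)%N -> w F i b = w G i b by move=> hi; rewrite /w FG.
split.
- by move=> i b hi; rewrite -FG //; apply: H1.
- by move=> i b i' b' hi hi'; rewrite -!wFG //; apply: H2.
- move=> sl c usl Hsl; apply: H3 => // x /Hsl [i [b [hi ->]]].
  by exists i, b; split => //; rewrite wFG.
Qed.

Definition good k F := forall N, (k <= N)%N -> exists G, Pn N G /\ forall i b, (i < k)%N -> G i b = F i b.

Definition upd (F : nat -> bool -> nat) k (p : nat * nat) :=
  fun i b => if i == k then (if b then p.2 else p.1) else F i b.

Lemma good_step k F : good k F -> exists p, good k.+1 (upd F k p).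
Proof.
move=> Hg; apply: NNPP => Hno.
have H (p : 'I_(size S) * 'I_(size S)) : exists Np, (k < Np)%N /\ forall G, Pn Np G ->
    ~ (forall i b, (i < k.+1)%N -> G i b = upd F k (val p.1, val p.2) i b).
  apply: NNPP => Hn; apply: Hno; exists (val p.1, val p.2) => N hN.
  apply: NNPP => HG; apply: Hn; exists N; split => // G PG Hag; apply: HG; exists G; split => //.
have [Nf HNf] := fin_all_exists H.
pose N := maxn k.+1 (\max_p Nf p).
have [|G [PG Hag]] := Hg N; first by rewrite /N; lia.
have hk : (k < N)%N by rewrite /N; lia.
have [H1 _ _] := PG.
pose p := (Ordinal (H1 k false hk), Ordinal (H1 k true hk)).
have [_ Hp] := HNf p.
apply: (Hp G).
  apply: Pn_restr PG; rewrite /N; apply: leq_trans (leq_maxr _ _); exact: (leq_bigmax p).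
move=> i b hi; rewrite /upd; case: eqP => [->|ne].
  by case: b.
by rewrite Hag //; move: hi ne; lia.
Qed.

Lemma pick_ex k F : exists p, good k F -> good k.+1 (upd F k p).
Proof.
case: (classic (good k F)) => [/good_step [p Hp]|Hn]; first by exists p.
by exists (0%N, 0%N).
Qed.

Definition pickp k F := proj1_sig (constructive_indefinite_description _ (pick_ex k F)).

Fixpoint seqF k : nat -> bool -> nat :=
  if k is k'.+1 then upd (seqF k') k' (pickp k' (seqF k')) else fun _ _ => 0%N.

Lemma seqF_good k : good k (seqF k).
Proof.
elim: k => [|k IH].
  move=> N _; have [G PG] := FL N; by exists G.
exact: (proj2_sig (constructive_indefinite_description _ (pick_ex k (seqF k))) IH).
Qed.

Lemma seqF_stable m i b : (i < m)%N -> seqF m i b = seqF i.+1 i b.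
Proof.
elim: m => // m IH; rewrite ltnS leq_eqVlt => /orP [/eqP ->|hi] //=.
rewrite /upd; case: eqP => [e1|_]; last exact: IH.
by move: hi; rewrite e1 ltnn.
Qed.

Definition Finf i b := seqF i.+1 i b.

Lemma Finf_P N : Pn N Finf.
Proof.
have [G [PG Hag]] := seqF_good (leqnn N).
apply: Pn_ext PG => i b hi; rewrite Hag // seqF_stable //.
Qed.

End Finite.

Unset Implicit Arguments. Set Strict Implicit.

Theorem proposition3 (K : fieldType) (R : lmodType K) (mul : R -> R -> R)
  (Hmul : is_assoc_algebra_mul mul) (Haff : affine mul)
  (Hinf : infinite_dim R) (e : nat -> R) (He : is_basis e) (S : seq R)
  (Hdim : forall I : seq nat, uniq I ->
     span_dim_ge (fun y => exists i r, [/\ i \in I, r \in S & y = mul (e i) r])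
                 (2 * size I)%N) :
  exists (m : nat) (A : 'I_m -> R -> Prop) (g h : 'I_m -> R),
    [/\ (* {A_k} is a partition of the basis into nonempty blocks *)
        [/\ (forall k x, A k x -> exists i, x = e i),
             (forall k, exists x, A k x),
             (forall k k', k <> k' -> forall x, A k x -> A k' x -> False)
           & (forall i, exists k, A k (e i))],
        (forall k, g k \in S /\ h k \in S)
      & mutually_independent
          (fun kb : 'I_m * bool =>
             rmul_img mul (A kb.1) (if kb.2 then h kb.1 else g kb.1))].
Proof.
pose F := Finf mul e S.
have PF := Finf_P He Hdim.
pose s := size S.
pose pr i := (F i false, F i true).
have prs i : ((pr i).1 < s)%N /\ ((pr i).2 < s)%N.
  by have [H1 _ _] := PF i.+1; split; apply: H1.
pose used p := if excluded_middle_informative (exists i, pr i = p) then true else false.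
pose L := undup [seq p <- [seq (x, y) | x <- iota 0 s, y <- iota 0 s] | used p].
have uL : uniq L by apply: undup_uniq.
have memL p : p \in L -> (exists i, pr i = p) /\ ((p.1 < s)%N /\ (p.2 < s)%N).
  rewrite mem_undup mem_filter => /andP [up /allpairsP [[x y] [/= xs ys ep]]].
  split; last by rewrite ep; rewrite mem_iota in xs; rewrite mem_iota in ys; simpl; lia.
  by move: up; rewrite /used; case: excluded_middle_informative.
have prL i : pr i \in L.
  rewrite mem_undup mem_filter; apply/andP; split.
    by rewrite /used; case: excluded_middle_informative => // nH; case: nH; exists i.
  apply/allpairsP; exists (pr i); rewrite !mem_iota /=.
  by rewrite add0n; have := prs i; rewrite /pr /= => -[-> ->].
have [einj _ _] := He.
pose m := size L.
pose AA (k : 'I_m) x := exists i, x = e i /\ pr i = nth (0%N, 0%N) L k.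
pose gg (k : 'I_m) := S`_((nth (0%N, 0%N) L k).1).
pose hh (k : 'I_m) := S`_((nth (0%N, 0%N) L k).2).
exists m, AA, gg, hh; split.
- split.
  + by move=> k x [i [-> _]]; exists i.
  + move=> k; have [[i Hi] _] := memL _ (mem_nth (0%N, 0%N) (ltn_ord k)).
    by exists (e i), i.
  + move=> k k' kk x [i [-> Hi]] [i' [ei Hi']].
    have ii := einj _ _ ei; subst i'.
    apply: kk; apply: val_inj; apply/eqP.
    by rewrite -(nth_uniq (0%N, 0%N) (ltn_ord k) (ltn_ord k') uL) -Hi -Hi'.
  + move=> i; have hk : (index (pr i) L < m)%N by rewrite index_mem.
    by exists (Ordinal hk), i; split => //=; rewrite nth_index.
- move=> k; have [_ [h1 h2]] := memL _ (mem_nth (0%N, 0%N) (ltn_ord k)).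
  by rewrite /gg /hh !mem_nth.
have Hmem (kb : 'I_m * bool) y : rmul_img mul (AA kb.1) (if kb.2 then hh kb.1 else gg kb.1) y ->
    exists i, pr i = nth (0%N, 0%N) L kb.1 /\ y = w mul e S F i kb.2.
  move=> [x [[i [-> Hi]] ->]]; exists i; split => //.
  by rewrite /w /gg /hh -Hi; case: kb.2.
split.
- move=> [k b] [k' b'] ne y /Hmem [i [Hi ->]] /Hmem [i' [Hi' /= ew]].
  have [_ H2 _] := PF (maxn i i').+1.
  have [ei eb] := H2 i b i' b' ltac:(lia) ltac:(lia) ew.
  subst i' b'; apply: ne; congr (_, _); apply: val_inj; apply/eqP.
  by rewrite -(nth_uniq (0%N, 0%N) (ltn_ord k) (ltn_ord k') uL) /= -Hi -Hi'.
- move=> sl c usl Hsl.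
  have [n Hn] : exists n, forall y, y \in sl -> exists i b, (i < n)%N /\ y = w mul e S F i b.
    clear usl; elim: sl Hsl => [|y sl IH] Hsl; first by exists 0%N.
    have [|n Hn] := IH.
      by move=> z zs; apply: Hsl; rewrite inE zs orbT.
    have [kb /Hmem [i [_ ey]]] := Hsl y (mem_head _ _).
    exists (maxn n i.+1) => z; rewrite inE => /orP [/eqP ->|zs].
      by exists i, kb.2; split => //; lia.
    have [i' [b' [hi' ->]]] := Hn z zs.
    by exists i', b'; split => //; lia.
  have [_ _ H3] := PF n.
  by apply: H3.
Qed.
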